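(* Let $M$ and $M'$ be two stable matchings in an instance $I$ of SPA-S, and let $M^\lor$ be the assignment defined from $M,M'$ in the context. Then $M^\lor$ is a matching.
   Context: An instance $I$ of SPA-S consists of a finite set $\mathcal{S}$ of students, a finite set $\mathcal{P}$ of projects and a finite set $\mathcal{L}$ of lecturers. Each student $s_i$ ranks a subset $A_i\subseteq\mathcal{P}$ (its acceptable projects) in strict order. Each project is offered by exactly one lecturer; lecturer $l_k$ offers a nonempty set $P_k\subseteq\mathcal{P}$, the $P_k$ partitioning $\mathcal{P}$. Each lecturer $l_k$ ranks in strict order the students who find at least one project of $P_k$ acceptable. Projects have capacities $c_j\in\mathbb{Z}^+$, lecturers have capacities $d_k\in\mathbb{Z}^+$ with $\max\{c_j:p_j\in P_k\}\le d_k\le\sum\{c_j:p_j\in P_k\}$. A pair $(s_i,p_j)$, $p_j$ offered by $l_k$, is acceptable if $p_j\in A_i$ and $s_i$ is on $l_k$'s list. A matching $M$ is a set of acceptable pairs with each student in at most one pair, $|M(p_j)|\le c_j$, $|M(l_k)|\le d_k$, where for an assignment $M$ (a set of acceptable pairs), $M(s_i)$, $M(p_j)$, $M(l_k)$ denote the project of $s_i$, the students assigned to $p_j$, and the students assigned to projects of $l_k$. Undersubscribed/full means fewer than/exactly capacity many assigned students. An acceptable pair $(s_i,p_j)\notin M$ ($p_j$ offered by $l_k$) blocks $M$ if ($s_i$ is unassigned or prefers $p_j$ to $M(s_i)$) and one of: (P1) $p_j$ and $l_k$ undersubscribed; (P2) $p_j$ undersubscribed, $l_k$ full, $s_i\in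 M(l_k)$; (P3) $p_j$ undersubscribed, $l_k$ full, $l_k$ prefers $s_i$ to the worst student of $M(l_k)$; (P4) $p_j$ full and $l_k$ prefers $s_i$ to the worst student of $M(p_j)$. $M$ is stable if it has no blocking pair. Given stable matchings $M,M'$, $M^\lor$ is the assignment in which each student unassigned in both $M$ and $M'$ is unassigned, each student assigned to the same project in both is assigned to that project, and every other student is assigned to the worse (in her preference) of her projects in $M$ and $M'$. *)

(* Defs.v *)
From mathcomp Require Import all_boot all_order.
Set Implicit Arguments. Unset Strict Implicit. Unset Printing Implicit Defensive.

Record SPAS (S P L : finType) := {
  spref : S -> seq P;     (* student's ranked list of acceptable projects, best first *)
  lpref : L -> seq S;     (* lecturer's ranked list of students, best first *)
  offer : P -> L;
  pcap  : P -> nat;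
  lcap  : L -> nat
}.

Section SPAS_defs.
Variables (S P L : finType) (I : SPAS S P L).

Definition offered (l : L) : {set P} := [set p | offer I p == l].

Definition prefers (T : eqType) (r : seq T) (x y : T) : bool :=
  (x \in r) && (index x r < index y r).

Definition valid_instance : Prop :=
  [/\ forall s, uniq (spref I s),
      forall l, uniq (lpref I l),
      forall l s, (s \in lpref I l) = [exists p, (p \in spref I s) && (offer I p == l)],
      forall l, offered l != set0
    & (forall p, 0 < pcap I p) /\ forall l, (\max_(p in offered l) pcap I p <= lcap I l)
                /\ (lcap I l <= \sum_(p in offered l) pcap I p)].

Definition acceptable (s : S) (p : P) : bool :=
  (p \in spref I s) && (s \in lpref I (offer I p)).

Definition Mp (M : {set S * P}) (p : P) : {set S} := [set s | (s, p) \in M].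
Definition Ml (M : {set S * P}) (l : L) : {set S} :=
  [set s | [exists p, ((s, p) \in M) && (offer I p == l)]].

Definition is_matching (M : {set S * P}) : Prop :=
  [/\ forall s p, (s, p) \in M -> acceptable s p,
      forall s p p', (s, p) \in M -> (s, p') \in M -> p = p',
      forall p, #|Mp M p| <= pcap I p
    & forall l, #|Ml M l| <= lcap I l].

Definition p_under M p := #|Mp M p| < pcap I p.
Definition p_full M p := #|Mp M p| == pcap I p.
Definition l_under M l := #|Ml M l| < lcap I l.
Definition l_full M l := #|Ml M l| == lcap I l.

(* l prefers s to the worst student of X: some member of X is ranked below s *)
Definition lprefers_to_worst (l : L) (s : S) (X : {set S}) : Prop :=
  exists2 s', s' \in X & prefers (lpref I l) s s'.

Definition blocks (M : {set S * P}) (s : S) (p : P) : Prop :=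
  let l := offer I p in
  [/\ acceptable s p, (s, p) \notin M,
      (forall p', (s, p') \in M -> prefers (spref I s) p p')
    & [\/ p_under M p /\ l_under M l,
          [/\ p_under M p, l_full M l & s \in Ml M l],
          [/\ p_under M p, l_full M l & lprefers_to_worst l s (Ml M l)]
        | p_full M p /\ lprefers_to_worst l s (Mp M p)]].

Definition stable (M : {set S * P}) : Prop :=
  is_matching M /\ forall s p, ~ blocks M s p.

Definition assigned (M : {set S * P}) (s : S) : bool := [exists p, (s, p) \in M].

Definition Mvee (M M' : {set S * P}) : {set S * P} :=
  [set x : S * P |
    let: (s, p) := x in
    [|| ((s, p) \in M) && ((s, p) \in M'),
        ((s, p) \in M) && ~~ assigned M' s,
        ((s, p) \in M') && ~~ assigned M s,
        ((s, p) \in M) &&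
          [exists p', [&& (s, p') \in M', p' != p & prefers (spref I s) p' p]]
      | ((s, p) \in M') &&
          [exists p', [&& (s, p') \in M, p' != p & prefers (spref I s) p' p]]]].

End SPAS_defs.

(* Main.v *)
Require Import Defs.
From mathcomp Require Import all_boot all_order.
From mathcomp Require Import zify.
Set Implicit Arguments. Unset Strict Implicit. Unset Printing Implicit Defensive.

Lemma sum_card_disj (S T : finType) (Q : pred T) (B : T -> {set S}) :
  (forall i j s, Q i -> Q j -> s \in B i -> s \in B j -> i = j) ->
  \sum_(i | Q i) #|B i| = #|[set s | [exists i, Q i && (s \in B i)]]|.
Proof.
move=> disj.
have -> : \sum_(i | Q i) #|B i| = \sum_(i | Q i) \sum_s (s \in B i : nat).
  apply: eq_bigr => i _; rewrite -sum1_card big_mkcond /=.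
  by apply: eq_bigr => s _; case: (s \in B i).
rewrite exchange_big /= -sum1_card [RHS]big_mkcond /=.
apply: eq_bigr => s _; rewrite inE.
case: existsP => [[i0 /andP[Qi0 si0]] | none].
  rewrite (bigD1 i0) //= si0 big1 // => j /andP[Qj ji0].
  case sj: (s \in B j) => //; by rewrite (disj _ _ _ Qj Qi0 sj si0) eqxx in ji0.
rewrite big1 // => j Qj; case sj: (s \in B j) => //; exfalso; apply: none.
by exists j; rewrite Qj sj.
Qed.

Lemma sum_eq_term (T : finType) (Q : pred T) (E1 E2 : T -> nat) :
  (forall i, Q i -> E1 i <= E2 i) ->
  \sum_(i | Q i) E2 i <= \sum_(i | Q i) E1 i -> forall i, Q i -> E1 i = E2 i.
Proof.
move=> le ge i Qi.
have [_ h] := leqif_sum (fun i Qi => leqif_eq (le i Qi)).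
have : \sum_(i | Q i) E1 i == \sum_(i | Q i) E2 i.
  by rewrite eqn_leq ge andbT; apply: leq_sum.
by rewrite h => /forallP /(_ i) /implyP /(_ Qi) /eqP.
Qed.

Lemma prefers_irr (T : eqType) (r : seq T) x : prefers r x x = false.
Proof. by rewrite /prefers ltnn andbF. Qed.

Lemma prefers_asym (T : eqType) (r : seq T) x y :
  prefers r x y -> prefers r y x = false.
Proof.
by rewrite /prefers => /andP[_ h]; rewrite ltnNge (ltnW h) andbF.
Qed.

Lemma prefers_total (T : eqType) (r : seq T) x y :
  x \in r -> y \in r -> x != y -> prefers r x y || prefers r y x.
Proof.
rewrite /prefers => xr yr nxy; rewrite xr yr /=; case: ltngtP => // e.
by move/eqP: nxy; case; rewrite -(nth_index x xr) e nth_index.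
Qed.

Section Proof.
Variables (S P L : finType) (I : SPAS S P L).
Implicit Types (M : {set S * P}) (s t : S) (p : P) (l : L).

Definition Xs (M M' : {set S * P}) : {set S} :=
  [set s | [exists p, ((s, p) \in M) &&
     [forall p', ((s, p') \in M') ==> prefers (spref I s) p p']]].

Lemma XsP M M' s :
  reflect (exists p, (s, p) \in M /\
             forall p', (s, p') \in M' -> prefers (spref I s) p p')
          (s \in Xs M M').
Proof.
rewrite inE; apply: (iffP existsP) => [[p /andP[h /forallP f]]|[p [h f]]];
  exists p.
  by split=> // p'; apply/implyP/f.
by rewrite h; apply/forallP => p'; apply/implyP/f.
Qed.

Lemma m_fun M : is_matching I M -> forall s p p',
  (s, p) \in M -> (s, p') \in M -> p = p'.
Proof. by case. Qed.

Lemma m_acc M : is_matching I M -> forall s p, (s, p) \in M -> acceptable I s p.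
Proof. by case. Qed.

Lemma Xs_in M M' s p : is_matching I M -> s \in Xs M M' -> (s, p) \in M ->
  forall p', (s, p') \in M' -> prefers (spref I s) p p'.
Proof.
move=> hM /XsP [p0 [h0 f]] h; rewrite (m_fun hM h h0); exact: f.
Qed.

Lemma Mp_Ml M s p : s \in Mp M p -> s \in Ml I M (offer I p).
Proof. by rewrite !inE => h; apply/existsP; exists p; rewrite h eqxx. Qed.

Lemma NB M M' s p : is_matching I M -> stable I M' -> s \in Xs M M' ->
  (s, p) \in M ->
  (forall t, t \in Mp M' p -> ~~ prefers (lpref I (offer I p)) s t) /\
  (p_under I M' p -> [/\ l_full I M' (offer I p), s \notin Ml I M' (offer I p)
      & forall t, t \in Ml I M' (offer I p) -> ~~ prefers (lpref I (offer I p)) s t]).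
Proof.
move=> hM [hM' nb] sX sp.
have hpref := Xs_in hM sX sp.
have acc := m_acc hM sp.
have nsp : (s, p) \notin M' by apply/negP => /hpref; rewrite prefers_irr.
have NB := nb s p.
case: (hM') => _ _ cp cl.
have [pu|pf] : p_under I M' p \/ p_full I M' p.
  by rewrite /p_under /p_full ltn_neqAle cp andbT; case: eqP; auto.
  have [lu|lf] : l_under I M' (offer I p) \/ l_full I M' (offer I p).
    by rewrite /l_under /l_full ltn_neqAle cl andbT; case: eqP; auto.
    by exfalso; apply: NB; split => //; apply: Or41.
  have nsl : s \notin Ml I M' (offer I p).
    by apply/negP => sl; apply: NB; split => //; apply: Or42.
  have nt : forall t, t \in Ml I M' (offer I p) ->
      ~~ prefers (lpref I (offer I p)) s t.
    move=> t tl; apply/negP => pr; apply: NB; split => //; apply: Or43.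
    by split => //; exists t.
  split => //; move=> t tp; apply: nt; exact: Mp_Ml.
split.
  move=> t tp; apply/negP => pr; apply: NB; split => //; apply: Or44.
  by split => //; exists t.
by rewrite /p_under (eqP pf) ltnn.
Qed.


Lemma excl M M' s t p : stable I M -> stable I M' -> s \in Xs M M' ->
  (s, p) \in M -> t \in Xs M' M -> (t, p) \in M' -> False.
Proof.
move=> sM sM' sX sp tY tp.
have [n1 _] := NB sM.1 sM' sX sp.
have [n2 _] := NB sM'.1 sM tY tp.
have ts : t \in Mp M' p by rewrite inE.
have ss : s \in Mp M p by rewrite inE.
have nst : s != t.
  apply/eqP => est; subst t.
  by move: (Xs_in sM.1 sX sp tp); rewrite prefers_irr.
have /andP [_ sl] := m_acc sM.1 sp.
have /andP [_ tl] := m_acc sM'.1 tp.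
by move: (prefers_total sl tl nst); rewrite (negbTE (n1 t ts)) (negbTE (n2 s ss)).
Qed.

Lemma notXY M M' s p : is_matching I M -> is_matching I M' ->
  (s, p) \in M' -> s \notin Xs M M' -> s \notin Xs M' M -> (s, p) \in M.
Proof.
move=> hM hM' sp nX nY.
case: (boolP [exists q, (s, q) \in M]) => [/existsP [q sq]|none].
  case: (eqVneq p q) => [-> //|npq].
  have /andP [pr _] := m_acc hM' sp.
  have /andP [qr _] := m_acc hM sq.
  case/orP: (prefers_total pr qr npq) => pq.
    case/negP: nY; apply/XsP; exists p; split => // q' sq'.
    by rewrite (m_fun hM sq' sq).
  case/negP: nX; apply/XsP; exists q; split => // q' sq'.
  by rewrite (m_fun hM' sq' sp).
case/negP: nY; apply/XsP; exists p; split => // q' sq'.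
by case/negP: none; apply/existsP; exists q'.
Qed.

Lemma sumMp M (hM : is_matching I M) (Z : {set S}) l :
  \sum_(p | offer I p == l) #|Mp M p :&: Z| = #|Ml I M l :&: Z|.
Proof.
rewrite sum_card_disj.
  apply: eq_card => s; rewrite !inE.
  apply/existsP/andP => [[p /andP [/eqP <-]]|[/existsP [p /andP [sp /eqP <-]] sZ]].
    rewrite !inE => /andP [sp sZ]; split => //; apply/existsP; exists p.
    by rewrite sp eqxx.
  by exists p; rewrite eqxx !inE sp sZ.
move=> i j s _ _; rewrite !inE => /andP [si _] /andP [sj _].
exact: m_fun hM _ _ _ si sj.
Qed.

Lemma sumMl M (hM : is_matching I M) (Z : {set S}) :
  \sum_l #|Ml I M l :&: Z| = #|[set s in Z | [exists p, (s, p) \in M]]|.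
Proof.
rewrite (sum_card_disj (Q := predT)).
  apply: eq_card => s; rewrite !inE.
  apply/existsP/andP => [[l /=]|[sZ /existsP [p sp]]].
    rewrite !inE => /andP [/existsP [p /andP [sp _]] sZ]; split => //.
    by apply/existsP; exists p.
  by exists (offer I p); rewrite /= !inE sZ andbT; apply/existsP; exists p; rewrite sp eqxx.
move=> i j s _ _; rewrite !inE => /andP [/existsP [p /andP [sp /eqP <-]] _].
move=> /andP [/existsP [q /andP [sq /eqP <-]] _].
by rewrite (m_fun hM sp sq).
Qed.

Lemma card_le_cap M p : is_matching I M -> #|Mp M p| <= pcap I p.
Proof. by case. Qed.
Lemma card_le_lcap M l : is_matching I M -> #|Ml I M l| <= lcap I l.
Proof. by case. Qed.

Lemma lec_cases M M' (sM : stable I M) (sM' : stable I M') l :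
  (forall p, offer I p == l -> #|Mp M p :&: Xs M M'| <= #|Mp M' p :&: Xs M M'|) \/
  (#|Ml I M l| <= #|Ml I M' l| /\ forall p, offer I p == l ->
      #|Mp M' p :\: Xs M M'| <= #|Mp M p :\: Xs M M'|).
Proof.
have hM := sM.1; have hM' := sM'.1.
case: (boolP [exists s, exists p, [&& (s, p) \in M, s \in Xs M M',
                                      offer I p == l & p_under I M' p]]).
  case/existsP => s0 /existsP [p0 /and4P [sp0 s0X /eqP ol pu]]; right.
  have [_ /(_ pu) [lf ns0 nt]] := NB hM sM' s0X sp0.
  subst l; split.
    by rewrite (eqP lf); apply: card_le_lcap.
  move=> p /eqP op.
  case: (boolP [exists t, (t \in Mp M' p) && (t \in Xs M' M)]).
    case/existsP => t /andP [tp tY].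
    have tp' : (t, p) \in M' by rewrite inE in tp.
    have [n1 n2] := NB hM' sM tY tp'.
    have pf : p_full I M p.
      have [pu'|//] : p_under I M p \/ p_full I M p.
        by rewrite /p_under /p_full ltn_neqAle card_le_cap // andbT; case: eqP; auto.
      have [_ _ ntt] := n2 pu'.
      have s0l : s0 \in Ml I M (offer I p).
        by rewrite op; apply: Mp_Ml; rewrite inE.
      have tl : t \in Ml I M' (offer I p0) by rewrite -op; apply: Mp_Ml.
      have nst : s0 != t by apply/eqP => e; subst t; rewrite tl in ns0.
      have /andP [_ s0r] := m_acc hM sp0.
      have /andP [_ tr] := m_acc hM' tp'.
      rewrite op in tr.
      move: (prefers_total s0r tr nst).
      by rewrite (negbTE (nt t tl)); move: (ntt s0 s0l); rewrite op => /negbTE ->.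
    have noX : Mp M p :\: Xs M M' = Mp M p.
      apply/setP => s; rewrite in_setD; case sm: (s \in Mp M p); rewrite ?andbF // andbT.
      apply/negP => sX; apply: (excl sM sM' sX _ tY tp'); by rewrite inE in sm.
    rewrite noX (eqP pf); apply: leq_trans (card_le_cap _ hM').
    by apply: subset_leq_card; apply: subsetDl.
  move=> nex; apply: subset_leq_card; apply/subsetP => s; rewrite !in_setD.
  move=> /andP [nX sp]; rewrite nX /= inE; rewrite inE in sp.
  apply: (notXY hM hM' sp nX).
  by apply/negP => sY; case/negP: nex; apply/existsP; exists s; rewrite inE sp sY.
move=> nex; left => p /eqP op.
case: (boolP [exists s, s \in Mp M p :&: Xs M M']); last first.
  move=> none; suff -> : Mp M p :&: Xs M M' = set0 by rewrite cards0.
  apply/setP => s; rewrite in_set0; apply/negbTE/negP => h.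
  by case/negP: none; apply/existsP; exists s.
case/existsP => s0; rewrite in_setI => /andP [s0p s0X]; rewrite inE in s0p.
have pf : p_full I M' p.
  have [pu'|//] : p_under I M' p \/ p_full I M' p.
    by rewrite /p_under /p_full ltn_neqAle card_le_cap // andbT; case: eqP; auto.
  case/negP: nex; apply/existsP; exists s0; apply/existsP; exists p.
  by rewrite s0p s0X op eqxx pu'.
have sub : Mp M' p :\: Xs M M' \subset Mp M p :\: Xs M M'.
  apply/subsetP => s; rewrite !in_setD => /andP [nX sp]; rewrite nX /= inE.
  rewrite inE in sp.
  apply: (notXY hM hM' sp nX); apply/negP => sY.
  exact: (excl sM sM' s0X s0p sY sp).
have := subset_leq_card sub.
have := cardsID (Xs M M') (Mp M p).
have := cardsID (Xs M M') (Mp M' p).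
have := card_le_cap p hM.
rewrite (eqP pf); lia.
Qed.

Lemma mem_Mp M s p : (s \in Mp M p) = ((s, p) \in M).
Proof. by rewrite inE. Qed.

Lemma sumMpD M (hM : is_matching I M) (Z : {set S}) l :
  \sum_(p | offer I p == l) #|Mp M p :\: Z| = #|Ml I M l :\: Z|.
Proof. under eq_bigr do rewrite setDE. by rewrite sumMp // setDE. Qed.

Lemma lec_le M M' (sM : stable I M) (sM' : stable I M') l :
  #|Ml I M l :&: Xs M M'| <= #|Ml I M' l :&: Xs M M'|.
Proof.
case: (lec_cases sM sM' l) => [h|[le h]].
  by rewrite -(sumMp sM.1) -(sumMp sM'.1); apply: leq_sum.
have := @leq_sum _ (index_enum P) (fun p => offer I p == l) _ _ h.
rewrite (sumMpD sM.1) (sumMpD sM'.1).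
have := cardsID (Xs M M') (Ml I M l).
have := cardsID (Xs M M') (Ml I M' l).
lia.
Qed.

Lemma glob M M' (sM : stable I M) (sM' : stable I M') :
  (forall l, #|Ml I M l :&: Xs M M'| = #|Ml I M' l :&: Xs M M'|) /\
  (forall s, s \in Xs M M' -> exists p, (s, p) \in M').
Proof.
have le := lec_le sM sM'.
have eA : [set s in Xs M M' | [exists p, (s, p) \in M]] = Xs M M'.
  apply/setP => s; rewrite in_set; case sX: (s \in Xs M M') => //=.
  by case/XsP: sX => p [sp _]; apply/existsP; exists p.
have sub : [set s in Xs M M' | [exists p, (s, p) \in M']] \subset Xs M M'.
  by apply/subsetP => s; rewrite in_set => /andP [].
have tot : \sum_l #|Ml I M' l :&: Xs M M'| <= \sum_l #|Ml I M l :&: Xs M M'|.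
  by rewrite (sumMl sM.1) (sumMl sM'.1) eA; apply: subset_leq_card.
have eqs := sum_eq_term (Q := predT) (fun l _ => le l) tot.
split; first by move=> l; apply: eqs.
have ceq : #|[set s in Xs M M' | [exists p, (s, p) \in M']]| = #|Xs M M'|.
  rewrite -(sumMl sM'.1) -{2}eA -(sumMl sM.1).
  by apply: eq_bigr => l _; rewrite eqs.
have /(subset_cardP ceq) E := sub.
move=> s; rewrite -E in_set => /andP [_ /existsP [p sp]]; by exists p.
Qed.

Lemma proj_cap M M' (sM : stable I M) (sM' : stable I M') p :
  #|Mp M p :\: Xs M M'| + #|Mp M' p :&: Xs M M'| <= pcap I p.
Proof.
have [g _] := glob sM sM'.
case: (lec_cases sM sM' (offer I p)) => [h|[le h]].
  have e := sum_eq_term h.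
  rewrite (sumMp sM.1) (sumMp sM'.1) g in e.
  rewrite -(e (leqnn _) p (eqxx _)).
  have := cardsID (Xs M M') (Mp M p); have := card_le_cap p sM.1; lia.
have e := sum_eq_term h.
rewrite (sumMpD sM.1) (sumMpD sM'.1) in e.
have := cardsID (Xs M M') (Ml I M (offer I p)).
have := cardsID (Xs M M') (Ml I M' (offer I p)).
have := g (offer I p) => g1 c1 c2.
have e2 : #|Ml I M (offer I p) :\: Xs M M'| <= #|Ml I M' (offer I p) :\: Xs M M'|
  by lia.
rewrite -(e e2 p (eqxx _)).
have := cardsID (Xs M M') (Mp M' p); have := card_le_cap p sM'.1; lia.
Qed.

Lemma lec_cap M M' (sM : stable I M) (sM' : stable I M') l :
  #|Ml I M l :\: Xs M M'| + #|Ml I M' l :&: Xs M M'| <= lcap I l.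
Proof.
have [g _] := glob sM sM'; rewrite -g.
have := cardsID (Xs M M') (Ml I M l); have := card_le_lcap l sM.1; lia.
Qed.

Lemma vee_sub M M' (sM : stable I M) (sM' : stable I M') s p :
  (s, p) \in Mvee I M M' ->
  ((s, p) \in M) && (s \notin Xs M M') || ((s, p) \in M') && (s \in Xs M M').
Proof.
have [_ gX] := glob sM sM'; have [_ gY] := glob sM' sM.
rewrite inE /= => /orP [|/orP [|/orP [|/orP []]]] /andP [a b].
- rewrite a /=; apply/orP; left; apply/negP => sX; move: (Xs_in sM.1 sX a b).
  by rewrite prefers_irr.
- rewrite a /=; apply/orP; left; apply/negP => sX; case: (gX s sX) => q sq.
  by case/negP: b; apply/existsP; exists q.
- exfalso; have sY : s \in Xs M' M.
    apply/XsP; exists p; split => // q sq.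
    by case/negP: b; apply/existsP; exists q.
  by case: (gY s sY) => q sq; case/negP: b; apply/existsP; exists q.
- case/existsP: b => p' /and3P [sp' _ pr].
  rewrite a /=; apply/orP; left; apply/negP => sX; move: (Xs_in sM.1 sX a sp').
  by rewrite (prefers_asym pr).
- case/existsP: b => p' /and3P [sp' _ pr].
  apply/orP; right; rewrite a /=.
  apply/XsP; exists p'; split => // q sq; by rewrite (m_fun sM'.1 sq a).
Qed.

End Proof.

Theorem lemma11 (S P L : finType) (I : SPAS S P L) (M M' : {set S * P}) :
  valid_instance I -> stable I M -> stable I M' -> is_matching I (Mvee I M M').
Proof.
move=> _ sM sM'; split.
- move=> s p /(vee_sub sM sM') /orP [] /andP [h _].
    exact: m_acc sM.1 _ _ h.
  exact: m_acc sM'.1 _ _ h.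
- move=> s p p' /(vee_sub sM sM') h1 /(vee_sub sM sM') h2.
  case/orP: h1 => /andP [a b]; case/orP: h2 => /andP [c d].
  + exact: m_fun sM.1 _ _ _ a c.
  + by rewrite d in b.
  + by rewrite b in d.
  + exact: m_fun sM'.1 _ _ _ a c.
- move=> p; apply: leq_trans (proj_cap sM sM' p).
  apply: leq_trans (_ : #|(Mp M p :\: Xs I M M') :|: (Mp M' p :&: Xs I M M')| <= _).
    apply: subset_leq_card; apply/subsetP => s.
    rewrite mem_Mp in_setU in_setD in_setI !mem_Mp.
    move/(vee_sub sM sM'); case/orP => /andP [a b]; by rewrite a b ?orbT.
  by rewrite cardsU leq_subr.
- move=> l; apply: leq_trans (lec_cap sM sM' l).
  apply: leq_trans (_ : #|(Ml I M l :\: Xs I M M') :|: (Ml I M' l :&: Xs I M M')| <= _).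
    apply: subset_leq_card; apply/subsetP => s.
    rewrite in_setU in_setD in_setI.
    rewrite inE => /existsP [q /andP [sq oq]].
    case/orP: (vee_sub sM sM' sq) => /andP [a b]; rewrite b /=.
      by apply/orP; left; rewrite inE; apply/existsP; exists q; rewrite a oq.
    by rewrite ?andbT inE; apply/existsP; exists q; rewrite a oq.
  by rewrite cardsU leq_subr.
Qed.
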